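(* Suppose each $f_v$ is $K_v$-Lipschitz. Then for every partition $\mathcal P$ of $V(G)$ into sets of size $r$ and $T=T_{\vec B,\mathcal P}$, $$|\mathbb E_{\vec B}(\xi)|\le\frac1{nr(r-1)}\sum_{v\in V(G)}\frac{|\mathcal P_v\cap\mathcal N(v)|}{d(v)}K_v.$$
   Context: Let $n,p,q$ be positive integers, $r=p+q$, $G$ a finite simple graph with $|V(G)|=rn$ and no isolated vertices; $\mathcal N(v)$, $d(v)$ neighbor set and degree. For each $v$, $f_v:2^{\mathcal N(v)}\to\mathbb R$ with $f_v(\emptyset)=0$. $\sigma_T(v)=q$ if $v\in T$, $-p$ otherwise; for $|T|=pn$, $\xi=\frac1{pqn}\sum_v\sigma_T(v)f_v(T\cap\mathcal N(v))$. $f_v$ is $K_v$-Lipschitz ($K_v>0$) if $|f_v(A)-f_v(A')|\le K_v|A\triangle A'|/d(v)$ for all $A,A'\subseteq\mathcal N(v)$. Restricted randomization: for $\mathcal P=(S_1,\dots,S_n)$, $S_i=\{w_i^1,\dots,w_i^r\}$, $B_1,\dots,B_n$ i.i.d. uniform $p$-subsets of $\{1,\dots,r\}$, $T_{\vec B,\mathcal P}=\{w_i^j:j\in B_i\}$; $\mathcal P_v$ is the block containing $v$. *)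

(* Defs.v *)
From HB Require Import structures.
From mathcomp Require Import all_boot all_order all_algebra.
Set Implicit Arguments. Unset Strict Implicit. Unset Printing Implicit Defensive.
Import Order.TTheory GRing.Theory Num.Theory.
Local Open Scope ring_scope.

Section Defs.
Variable V : finType.

Definition nbhd (e : rel V) (v : V) : {set V} := [set u | e v u].
Definition deg (e : rel V) (v : V) : nat := #|nbhd e v|.

Definition symdiff (A B : {set V}) : {set V} := (A :\: B) :|: (B :\: A).

Variable R : realFieldType.

Definition sigma (p q : nat) (T : {set V}) (v : V) : R :=
  if v \in T then q%:R else - p%:R.

Definition xi (n p q : nat) (e : rel V) (f : V -> {set V} -> R) (T : {set V}) : R :=
  (p * q * n)%:R^-1 * \sum_(v : V) sigma p q T v * f v (T :&: nbhd e v).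

Definition lipschitz (e : rel V) (fv : {set V} -> R) (Kv : R) (v : V) : Prop :=
  forall A A' : {set V}, A \subset nbhd e v -> A' \subset nbhd e v ->
    `|fv A - fv A'| <= Kv * (#|symdiff A A'|)%:R / (deg e v)%:R.

(* The partition P = (S_1,...,S_n), S_i = {w_i^1,...,w_i^r}, is encoded by
   a bijection w : 'I_n * 'I_r -> V with w (i, j) = w_i^j. *)
Definition T_of (n r : nat) (w : 'I_n * 'I_r -> V) (B : {ffun 'I_n -> {set 'I_r}}) : {set V} :=
  [set x | [exists i : 'I_n, [exists j : 'I_r, (j \in B i) && (w (i, j) == x)]]].

Definition blockOf (n r : nat) (w : 'I_n * 'I_r -> V) (v : V) : {set V} :=
  [set u | [exists i : 'I_n, [exists j : 'I_r, [exists j' : 'I_r,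
      (w (i, j) == v) && (w (i, j') == u)]]]].

Definition psubsets (n r p : nat) : {set {ffun 'I_n -> {set 'I_r}}} :=
  [set B : {ffun 'I_n -> {set 'I_r}} | [forall i, #|B i| == p]].

(* E_B(xi) for B_i i.i.d. uniform p-subsets *)
Definition expect_xi (n p q : nat) (e : rel V) (f : V -> {set V} -> R)
    (w : 'I_n * 'I_(p + q) -> V) : R :=
  (#|psubsets n (p + q) p|)%:R^-1 *
    \sum_(B in psubsets n (p + q) p) xi n p q e f (T_of w B).
End Defs.

(* Main.v *)
Require Import Defs.
From HB Require Import structures.
From mathcomp Require Import all_boot all_order all_algebra all_fingroup.
From mathcomp Require Import ring zify.
Import Order.TTheory GRing.Theory Num.Theory.
Local Open Scope ring_scope.
Set Implicit Arguments. Unset Strict Implicit. Unset Printing Implicit Defensive.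

Section Swap.
Variables (R : realFieldType) (n r p : nat) (i0 : 'I_n).
Notation S := (psubsets n r p).

Definition swp (a b : 'I_r) (B : {ffun 'I_n -> {set 'I_r}}) : {ffun 'I_n -> {set 'I_r}} :=
  [ffun i => if i == i0 then tperm a b @^-1: B i else B i].

Lemma swp_i0 a b B k : (k \in swp a b B i0) = (tperm a b k \in B i0).
Proof. by rewrite ffunE eqxx inE. Qed.

Lemma swp_ne a b B i : i != i0 -> swp a b B i = B i.
Proof. by rewrite ffunE => /negbTE ->. Qed.

Lemma swpK a b : involutive (swp a b).
Proof.
move=> B; apply/ffunP=> i; case: (eqVneq i i0) => [->|ne].
  by apply/setP=> k; rewrite !swp_i0 tpermK.
by rewrite !swp_ne.
Qed.

Lemma swp_S a b B : (swp a b B \in S) = (B \in S).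
Proof.
rewrite !inE; apply: eq_forallb => i; case: (eqVneq i i0) => [->|ne].
  by rewrite ffunE eqxx card_preimset //; apply: perm_inj.
by rewrite swp_ne.
Qed.

Lemma sum_swp a b (F : {ffun 'I_n -> {set 'I_r}} -> R) :
  \sum_(B in S) F B = \sum_(B in S) F (swp a b B).
Proof.
rewrite (reindex_inj (inv_inj (swpK a b))) /=.
by apply: eq_bigl => B; rewrite swp_S.
Qed.

Definition cntM (a : 'I_r) : R := \sum_(B in S) (if a \in B i0 then 1 else 0).
Definition cntN (a b : 'I_r) : R :=
  \sum_(B in S) (if (a \in B i0) && (b \notin B i0) then 1 else 0).

Lemma cardS_sum : \sum_(B in S) (1 : R) = #|S|%:R.
Proof. by rewrite sumr_const. Qed.

Lemma cntM_const a a' : cntM a = cntM a'.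
Proof.
rewrite /cntM (sum_swp a a'); apply: eq_bigr => B _.
by rewrite swp_i0 tpermL.
Qed.

Lemma cntM_val a : r%:R * cntM a = p%:R * #|S|%:R.
Proof.
have -> : r%:R * cntM a = \sum_(a' : 'I_r) cntM a'.
  by rewrite (eq_bigr (fun _ => cntM a)) ?sumr_const ?card_ord ?mulr_natl // => a' _; apply: cntM_const.
rewrite /cntM exchange_big /= -cardS_sum mulr_sumr; apply: eq_bigr => B.
rewrite inE => /forallP /(_ i0) /eqP <-.
by rewrite -big_mkcond sumr_const mulr1.
Qed.

Lemma cntN_const a b b' : b != a -> b' != a -> cntN a b = cntN a b'.
Proof.
move=> ba b'a; rewrite /cntN (sum_swp b b'); apply: eq_bigr => B _.
by rewrite !swp_i0 tpermL tpermD.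
Qed.

Lemma cntN_val a b : b != a -> (r - 1)%:R * cntN a b = (r - p)%:R * cntM a.
Proof.
move=> ba.
have -> : (r - 1)%:R * cntN a b = \sum_(b' : 'I_r) cntN a b'.
  rewrite (bigD1 a) //=.
  have -> : cntN a a = 0 by rewrite /cntN big1 // => B _; case: (a \in B i0).
  rewrite add0r.
  rewrite (eq_bigr (fun _ => cntN a b)); last by move=> b' b'a; apply: cntN_const.
  rewrite sumr_const -mulr_natl.
  have -> : #|(fun i : 'I_r => i != a)| = (r - 1)%N.
    by rewrite subn1 -[in RHS](card_ord r) -(cardC1 a); apply: eq_card.
  by rewrite mulr1 mulr_natl.
rewrite /cntN exchange_big /= /cntM mulr_sumr; apply: eq_bigr => B.
rewrite inE => /forallP /(_ i0) /eqP cB.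
case: (a \in B i0) => /=; last by rewrite big1 ?mulr0.
rewrite -big_mkcond sumr_const mulr1.
have := cardsC (B i0); rewrite card_ord cB => H.
have HC := addKn p #|~: B i0|; rewrite H in HC.
rewrite HC; congr (_%:R); apply: eq_card => x; by rewrite inE.
Qed.

Lemma cntN_final a b : b != a ->
  cntN a b * (r * (r - 1))%:R = #|S|%:R * (p * (r - p))%:R.
Proof.
move=> ba.
transitivity (r%:R * ((r - 1)%:R * cntN a b)); first by rewrite natrM; ring.
rewrite cntN_val //.
transitivity ((r - p)%:R * (r%:R * cntM a)); first by ring.
rewrite cntM_val natrM; ring.
Qed.
End Swap.

Lemma sum_ind (R : realFieldType) (T : finType) (P : pred T) (c : R) :
  \sum_(j : T) (if P j then c else 0) = #|P|%:R * c.
Proof. by rewrite -big_mkcond sumr_const mulr_natl. Qed.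

Section Vertex.
Variables (R : realFieldType) (V : finType) (e : rel V) (n p q : nat).
Local Notation r := (p + q)%N.
Variables (w : 'I_n * 'I_r -> V) (winv : V -> 'I_n * 'I_r).
Hypotheses (wK : cancel w winv) (winvK : cancel winv w).
Local Notation S := (psubsets n r p).

Lemma w_inj : injective w. Proof. exact: can_inj wK. Qed.

Lemma memT B i j : (w (i, j) \in T_of w B) = (j \in B i).
Proof.
rewrite inE; apply/existsP/idP => [[i' /existsP [j' /andP [jB /eqP E]]] | jB].
  by move/w_inj: E => [<- <-].
by exists i; apply/existsP; exists j; rewrite jB eqxx.
Qed.

Lemma cardB B i : B \in S -> #|B i| = p.
Proof. by rewrite inE => /forallP /(_ i) /eqP. Qed.

Lemma cardBC B i : B \in S -> #|(fun j => j \notin B i)| = q.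
Proof.
move=> BS; have := cardsC (B i); rewrite card_ord cardB // => H.
have HC := addKn p #|~: B i|; rewrite H addKn in HC.
apply: (etrans _ (esym HC)); by apply: eq_card => x; rewrite inE.
Qed.

Variables (i0 : 'I_n) (j0 : 'I_r) (fv : {set V} -> R) (Kv : R).
Hypotheses (irr : irreflexive e) (lip : lipschitz e fv Kv (w (i0, j0))).
Local Notation v := (w (i0, j0)).
Let g B := fv (T_of w B :&: nbhd e v).
Let X j := \sum_(B in S)
  (if (j0 \in B i0) && (j \notin B i0) then g B - g (swp i0 j0 j B) else 0).

Lemma XE j : X j = \sum_(B in S) (if (j0 \in B i0) && (j \notin B i0) then g B else 0)
   - \sum_(B in S) (if (j \in B i0) && (j0 \notin B i0) then g B else 0).
Proof.
rewrite [X in _ - X](sum_swp _ i0 j0 j) -sumrB; apply: eq_bigr => B _.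
rewrite !swp_i0 tpermL tpermR.
by case: ifP => _; rewrite ?subr0.
Qed.

Lemma decomp : \sum_(B in S) sigma R p q (T_of w B) v * g B = \sum_(j : 'I_r) X j.
Proof.
under [RHS]eq_bigr do rewrite XE.
rewrite sumrB exchange_big [X in _ - X]exchange_big /=.
rewrite -sumrB; apply: eq_bigr => B BS.
rewrite /sigma memT; case: (j0 \in B i0) => /=.
  rewrite [X in _ - X]big1 ?subr0; last by move=> j _; rewrite andbF.
  by rewrite sum_ind cardBC.
rewrite big1 // (eq_bigr (fun j => if j \in B i0 then g B else 0)); last by move=> j _; rewrite andbT.
by rewrite sum_ind (eq_card (B := B i0)) // cardB // sub0r mulNr.
Qed.

Hypothesis Kpos : 0 <= Kv.

Lemma key B j x : e v x -> x != w (i0, j) ->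
  (x \in T_of w (swp i0 j0 j B)) = (x \in T_of w B).
Proof.
have [[i k] ->] : exists ik, x = w ik by exists (winv x).
move=> ex ne; rewrite !memT; case: (eqVneq i i0) => [Ei|ine]; last by rewrite swp_ne.
subst i; rewrite swp_i0; case: tpermP => [Ek|Ek|//].
  by subst k; rewrite irr in ex.
by subst k; rewrite eqxx in ne.
Qed.

Lemma gdiff B j :
  `|g B - g (swp i0 j0 j B)| <= Kv * (if e v (w (i0, j)) then 1 else 0) / (deg e v)%:R.
Proof.
apply: le_trans (lip (subsetIr _ _) (subsetIr _ _)) _.
rewrite ler_wpM2r ?invr_ge0 ?ler0n // ler_wpM2l //.
have sub : symdiff (T_of w B :&: nbhd e v) (T_of w (swp i0 j0 j B) :&: nbhd e v)
    \subset [set x | (x == w (i0, j)) && e v x].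
  have inN y : (y \in nbhd e v) = e v y by rewrite inE.
  apply/subsetP => x; rewrite /symdiff in_setU !in_setD !in_setI !inN [in X in _ -> X]inE.
  case: (eqVneq x (w (i0, j))) => [->|ne] /=; first by case: (e v _); rewrite ?andbF.
  case ex: (e v x); rewrite ?andbF //= key //.
  by case: (x \in T_of w B).
apply: (le_trans (y := #|[set x | (x == w (i0, j)) && e v x]|%:R)); first by rewrite ler_nat subset_leq_card.
case ex: (e v (w (i0, j))).
  rewrite (eq_card (B := [set w (i0, j)])) ?cards1 //.
  by move=> x; rewrite !inE; case: eqP => // ->.
rewrite (eq_card (B := set0)) ?cards0 //.
by move=> x; rewrite !inE; case: eqP => // ->; rewrite ex.
Qed.

Let ind (j : 'I_r) : R := if e v (w (i0, j)) then 1 else 0.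

Lemma Xbound j : `|X j| <= cntN R p i0 j0 j * (Kv * ind j / (deg e v)%:R).
Proof.
apply: le_trans (ler_norm_sum _ _ _) _.
rewrite /cntN mulr_suml; apply: ler_sum => B _.
case: ifP => _; last by rewrite normr0 mul0r.
by rewrite mul1r gdiff.
Qed.

Lemma block_card :
  #|blockOf w v :&: nbhd e v| = #|(fun j => e v (w (i0, j)))|.
Proof.
rewrite -(card_imset _ (f := fun j => w (i0, j))); last by move=> j1 j2 /w_inj [].
apply: eq_card => x; rewrite in_setI /nbhd /blockOf !inE.
apply/andP/imsetP => [[/existsP [i /existsP [j /existsP [j' /andP [/eqP E1 /eqP E2]]]]] ex|].
  move/w_inj: E1 => [Ei _]; subst i; by exists j'; rewrite ?unfold_in E2.
move=> [j']; rewrite unfold_in => ex ->; split => //.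
by apply/existsP; exists i0; apply/existsP; exists j0; apply/existsP; exists j'; rewrite !eqxx.
Qed.

Lemma vbound : (1 < r)%N ->
  `|\sum_(B in S) sigma R p q (T_of w B) v * g B| <=
  (#|S|%:R * (p * q)%:R / (r * (r - 1))%:R) *
    (#|blockOf w v :&: nbhd e v|%:R / (deg e v)%:R * Kv).
Proof.
move=> r1; rewrite decomp; apply: le_trans (ler_norm_sum _ _ _) _.
set c0 := (#|S|%:R * (p * q)%:R / (r * (r - 1))%:R).
have rr0 : (r * (r - 1))%:R != 0 :> R.
  by rewrite pnatr_eq0 muln_eq0 negb_or; apply/andP; split; apply/eqP; lia.
apply: (le_trans (y := \sum_(j : 'I_r) c0 * (Kv * ind j / (deg e v)%:R))).
  apply: ler_sum => j _; apply: le_trans (Xbound j) _.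
  case: (eqVneq j j0) => [->|ne].
    by rewrite /ind irr !mulr0 mul0r !mulr0.
  have := cntN_final R p i0 ne; rewrite addKn => H.
  have -> : cntN R p i0 j0 j = c0 by rewrite /c0 -H mulfK.
  done.
apply: (le_trans (y := c0 * \sum_(j : 'I_r) Kv * ind j / (deg e v)%:R)).
  by rewrite mulr_sumr.
rewrite block_card; apply: ler_wpM2l.
  by rewrite /c0 !mulr_ge0 ?invr_ge0 ?ler0n.
have -> : \sum_(j : 'I_r) Kv * ind j / (deg e v)%:R =
    (Kv / (deg e v)%:R) * \sum_(j : 'I_r) ind j.
  by rewrite mulr_sumr; apply: eq_bigr => j _; rewrite mulrAC.
rewrite /ind sum_ind mulr1.
by rewrite le_eqVlt; apply/orP; left; apply/eqP; ring.
Qed.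
End Vertex.

Theorem mainTheorem10 (R : realFieldType) (V : finType) (e : rel V)
    (n p q : nat) (f : V -> {set V} -> R) (K : V -> R)
    (w : 'I_n * 'I_(p + q) -> V) :
  (0 < n)%N -> (0 < p)%N -> (0 < q)%N ->
  symmetric e -> irreflexive e ->
  #|V| = ((p + q) * n)%N ->
  (forall v : V, exists u : V, e v u) ->
  (forall v : V, f v set0 = 0) ->
  (forall v : V, 0 < K v) ->
  (forall v : V, lipschitz e (f v) (K v) v) ->
  bijective w ->
  `|expect_xi e f w| <=
    ((n * (p + q) * (p + q - 1))%:R)^-1 *
      \sum_(v : V) (#|blockOf w v :&: nbhd e v|)%:R / (deg e v)%:R * K v.
Proof.
move=> n0 p0 q0 _ irr _ _ _ Kp lipK [winv wK winvK].
have r1 : (1 < p + q)%N by lia.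
set S := psubsets n (p + q) p.
set c0 := (#|S|%:R * (p * q)%:R / ((p + q) * (p + q - 1))%:R : R).
have hv : forall v, `|\sum_(B in S) sigma R p q (T_of w B) v * f v (T_of w B :&: nbhd e v)| <=
   c0 * (#|blockOf w v :&: nbhd e v|%:R / (deg e v)%:R * K v).
  move=> v.
  have lv : lipschitz e (f v) (K v) (w ((winv v).1, (winv v).2)).
    by rewrite -surjective_pairing winvK; exact: lipK.
  have := vbound wK winvK irr lv (ltW (Kp v)) r1.
  by rewrite -surjective_pairing winvK.
have Kge v : 0 <= #|blockOf w v :&: nbhd e v|%:R / (deg e v)%:R * K v :> R.
  by rewrite mulr_ge0 ?divr_ge0 ?ler0n ?ltW.
rewrite /expect_xi /xi -/S.
have [S0|Sn0] := eqVneq #|S| 0%N.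
  rewrite S0 invr0 mul0r normr0 mulr_ge0 ?invr_ge0 ?ler0n //.
  by apply: sumr_ge0 => v _.
rewrite -mulr_sumr exchange_big /= normrM normrM [X in X * _]ger0_norm ?invr_ge0 ?ler0n //.
rewrite [X in _ * (X * _)]ger0_norm ?invr_ge0 ?ler0n //.
apply: (le_trans (y := #|S|%:R^-1 * ((p * q * n)%:R^-1 *
   \sum_(v : V) c0 * (#|blockOf w v :&: nbhd e v|%:R / (deg e v)%:R * K v)))).
  apply: ler_wpM2l; first by rewrite invr_ge0 ler0n.
  apply: ler_wpM2l; first by rewrite invr_ge0 ler0n.
  apply: le_trans (ler_norm_sum _ _ _) _; apply: ler_sum => v _; exact: hv.
rewrite -mulr_sumr le_eqVlt; apply/orP; left; apply/eqP.
set s := \sum_(v : V) _.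
have h1 : (#|S|%:R : R) != 0 by rewrite pnatr_eq0.
have h2 : ((p + q) * (p + q - 1))%:R != 0 :> R by rewrite pnatr_eq0; apply/eqP; lia.
have h3 : (p * q * n)%:R != 0 :> R by rewrite pnatr_eq0; apply/eqP; lia.
have h4 : (n * (p + q) * (p + q - 1))%:R != 0 :> R by rewrite pnatr_eq0; apply/eqP; lia.
have E1 : (n * (p + q) * (p + q - 1))%:R = n%:R * ((p + q) * (p + q - 1))%:R :> R.
  by rewrite -natrM mulnA.
have E2 : (p * q * n)%:R = (p * q)%:R * n%:R :> R by rewrite natrM.
rewrite /c0 E1 E2.
rewrite E1 in h4; rewrite E2 in h3.
field; rewrite ?h1 ?h2; apply/andP; split => //.
  by rewrite pnatr_eq0; apply/eqP; lia.
rewrite -natrD !pnatr_eq0 -!lt0n n0 p0 q0 andbT /=.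
by rewrite addn_gt0 p0.
Qed.
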